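(* Let $m\ge0$, let $f:\mathbb{R}^n\to\mathbb{R}$ be $m$-weakly convex, $x_k\in\mathbb{R}^n$, $\rho>0$, $\beta\in(0,1)$. Let $\tilde f_j:\mathbb{R}^n\to\mathbb{R}$ be convex with $\tilde f_j(x)\le f(x)+\frac m2\|x-x_k\|^2$ for all $x$; set $z_{j+1}=\arg\min_x\{\tilde f_j(x)+\frac\rho2\|x-x_k\|^2\}$, $\eta_j=\min_x\{\tilde f_j(x)+\frac\rho2\|x-x_k\|^2\}$, $s_{j+1}=\rho(x_k-z_{j+1})$. Let $g_{j+1}\in\mathbb{R}^n$ satisfy $g_{j+1}-m(z_{j+1}-x_k)\in\partial f(z_{j+1})$, and let $\tilde f_{j+1}:\mathbb{R}^n\to\mathbb{R}$ be convex with, for all $x\in\mathbb{R}^n$: (i) $\tilde f_{j+1}(x)\le f(x)+\frac m2\|x-x_k\|^2$; (ii) $\tilde f_{j+1}(x)\ge\tilde f_j(z_{j+1})+\langle s_{j+1},x-z_{j+1}\rangle$; (iii) $\tilde f_{j+1}(x)\ge f(z_{j+1})+\frac m2\|z_{j+1}-x_k\|^2+\langle g_{j+1},x-z_{j+1}\rangle$. Let $\eta_{j+1}=\min_x\{\tilde f_{j+1}(x)+\frac\rho2\|x-x_k\|^2\}$ and $\tilde\epsilon_{j+1}=f(z_{j+1})+\frac m2\|z_{j+1}-x_k\|^2-\tilde f_j(z_{j+1})$. Then $$\eta_{j+1}\ge\eta_j+\frac12\min\Big\{\tilde\epsilon_{j+1},\ \frac{\rho\,\tilde\epsilon_{j+1}^2}{\|g_{j+1}-s_{j+1}\|^2}\Big\}$$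 (with the second term read as $+\infty$ if $g_{j+1}=s_{j+1}$). If moreover $f(x_k)-\big(f(z_{j+1})+\frac m2\|z_{j+1}-x_k\|^2\big)<\beta\big(f(x_k)-\tilde f_j(z_{j+1})\big)$, then, with $\tilde\Delta_j:=f(x_k)-\eta_j$, $$\eta_{j+1}\ge\eta_j+\frac12\min\Big\{(1-\beta)\tilde\Delta_j,\ \frac{(1-\beta)^2\rho\,\tilde\Delta_j^2}{\|g_{j+1}-s_{j+1}\|^2}\Big\}.$$
   Context: A function $f$ is $m$-weakly convex ($m\ge 0$) if $x\mapsto f(x)+\frac{m}{2}\|x\|^2$ is convex. For such $f$, the (Fréchet) subdifferential is $\partial f(x)=\{v\in\mathbb{R}^n: f(y)\ge f(x)+\langle v,y-x\rangle-\frac{m}{2}\|y-x\|^2\ \forall y\}$. *)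

(* Defs.v *)
From HB Require Import structures.
From mathcomp Require Import all_boot all_order all_algebra.
From mathcomp Require Import reals.
Set Implicit Arguments. Unset Strict Implicit. Unset Printing Implicit Defensive.
Import Order.TTheory GRing.Theory Num.Theory.
Local Open Scope ring_scope.

Section Defs.
Variables (R : realType) (n : nat).

Definition dotp (u v : 'rV[R]_n) : R := \sum_(i < n) u ord0 i * v ord0 i.
Definition sqnorm (u : 'rV[R]_n) : R := dotp u u.

Definition convexf (f : 'rV[R]_n -> R) : Prop :=
  forall (x y : 'rV[R]_n) (t : R), 0 <= t -> t <= 1 ->
    f (t *: x + (1 - t) *: y) <= t * f x + (1 - t) * f y.

Definition weakly_convex (m : R) (f : 'rV[R]_n -> R) : Prop :=
  convexf (fun x => f x + m / 2 * sqnorm x).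

(* v \in \partial f(x) (Frechet subdifferential of an m-weakly convex f) *)
Definition subdiff (m : R) (f : 'rV[R]_n -> R) (x v : 'rV[R]_n) : Prop :=
  forall y, f y >= f x + dotp v (y - x) - m / 2 * sqnorm (y - x).

Definition is_min_value (phi : 'rV[R]_n -> R) (eta : R) : Prop :=
  (exists w, phi w = eta) /\ (forall x, eta <= phi x).

Definition is_argmin (phi : 'rV[R]_n -> R) (z : 'rV[R]_n) : Prop :=
  forall x, phi z <= phi x.

End Defs.

(* Main.v *)
Require Import Defs.
From HB Require Import structures.
From mathcomp Require Import all_boot all_order all_algebra.
From mathcomp Require Import reals ring lra.
Import Order.TTheory GRing.Theory Num.Theory.
Local Open Scope ring_scope.

Lemma scalar_step (R : realType) (rho lam M eps D a E tg fz1 ftjz F V: R):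
 0<rho -> 0<=lam -> lam <= 1 -> lam*eps = M -> lam^+2*V <= rho*M ->
 ftjz - rho*a <= fz1 -> F + tg <= fz1 ->
 0 <= D + 2*(lam/rho)*(tg+rho*a) + (lam/rho)^+2*V ->
 eps = F - ftjz ->
 ftjz + rho/2*E + 2^-1 * M <= fz1 + rho/2*(D+2*a+E).
Proof.
move=> hr hl0 hl1 hM hV h1 h2 hsq he.
have hsq' : 0 <= rho * D + 2*lam*(tg+rho*a) + lam^+2*V/rho.
  have hr0 : rho != 0 by rewrite gt_eqF.
  have -> : rho * D + 2*lam*(tg+rho*a) + lam^+2*V/rho = rho * (D + 2*(lam/rho)*(tg+rho*a) + (lam/rho)^+2*V).
    by field.
  exact: mulr_ge0 (ltW hr) hsq.
have hV' : lam^+2*V/rho <= M.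
  by rewrite ler_pdivrMr // (mulrC M).
have : (1-lam)*(ftjz - rho*a) + lam*(F+tg) <= fz1.
  nra.
nra.
Qed.

Set Implicit Arguments. Unset Strict Implicit.
Lemma minV (R : realType) (a b V : R) : 0 <= a -> 0 <= b -> 0 <= V ->
  0 <= Num.min a (b / V) /\ Num.min a (b / V) <= a /\ Num.min a (b / V) * V <= b.
Proof.
move=> ha hb hV; split; first by rewrite le_min ha divr_ge0.
split; first by rewrite ge_min lexx.
have [->|hV0] := eqVneq V 0; first by rewrite mulr0.
have hVp : 0 < V by rewrite lt_def hV0 hV.
rewrite -ler_pdivlMr //.
by rewrite ge_min lexx orbT.
Qed.

Section Vec.
Variables (R : realType) (n : nat).
Implicit Types u v w : 'rV[R]_n.

Lemma dotpC u v : dotp u v = dotp v u.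
Proof. by apply: eq_bigr => i _; rewrite mulrC. Qed.
Lemma dotpDl u w v : dotp (u + w) v = dotp u v + dotp w v.
Proof. by rewrite /dotp -big_split; apply: eq_bigr => i _; rewrite mxE mulrDl. Qed.
Lemma dotpZl (c : R) u v : dotp (c *: u) v = c * dotp u v.
Proof. by rewrite /dotp mulr_sumr; apply: eq_bigr => i _; rewrite mxE mulrA. Qed.
Lemma dotpNl u v : dotp (- u) v = - dotp u v.
Proof. by rewrite /dotp -sumrN; apply: eq_bigr => i _; rewrite mxE mulNr. Qed.
Lemma dotpBl u w v : dotp (u - w) v = dotp u v - dotp w v.
Proof. by rewrite dotpDl dotpNl. Qed.
Lemma sqnorm_ge0 u : 0 <= sqnorm u.
Proof. by apply: sumr_ge0 => i _; rewrite -expr2 sqr_ge0. Qed.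
Lemma sqnorm0 : sqnorm (0 : 'rV[R]_n) = 0.
Proof. by apply: big1 => i _; rewrite mxE mul0r. Qed.
Lemma sqnormD u v : sqnorm (u + v) = sqnorm u + 2 * dotp u v + sqnorm v.
Proof.
rewrite /sqnorm !dotpDl (dotpC u (u + v)) (dotpC v (u + v)) !dotpDl (dotpC v u).
by rewrite mulr2n; ring.
Qed.
Lemma dotpZr (c : R) u v : dotp u (c *: v) = c * dotp u v.
Proof. by rewrite dotpC dotpZl dotpC. Qed.
Lemma sqnormZ (c : R) u : sqnorm (c *: u) = c ^+ 2 * sqnorm u.
Proof. by rewrite /sqnorm dotpZl dotpZr mulrA expr2. Qed.
End Vec.

Theorem mainTheorem7 (R : realType) (n : nat) (m : R) (f : 'rV[R]_n -> R)
  (xk : 'rV[R]_n) (rho beta : R) (ftj ftj1 : 'rV[R]_n -> R)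
  (z g : 'rV[R]_n) (eta1 : R) :
  0 <= m -> weakly_convex m f -> 0 < rho -> 0 < beta -> beta < 1 ->
  convexf ftj ->
  (forall x, ftj x <= f x + m / 2 * sqnorm (x - xk)) ->
  (* z = z_{j+1} = argmin { ftj x + rho/2 ||x - xk||^2 } *)
  is_argmin (fun x => ftj x + rho / 2 * sqnorm (x - xk)) z ->
  let etaj := ftj z + rho / 2 * sqnorm (z - xk) in
  let s := rho *: (xk - z) in
  subdiff m f z (g - m *: (z - xk)) ->
  convexf ftj1 ->
  (forall x, ftj1 x <= f x + m / 2 * sqnorm (x - xk)) ->
  (forall x, ftj1 x >= ftj z + dotp s (x - z)) ->
  (forall x, ftj1 x >= f z + m / 2 * sqnorm (z - xk) + dotp g (x - z)) ->
  is_min_value (fun x => ftj1 x + rho / 2 * sqnorm (x - xk)) eta1 ->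
  let eps := f z + m / 2 * sqnorm (z - xk) - ftj z in
  (eta1 >= etaj + 2^-1 *
     (if g == s then eps else Num.min eps (rho * eps ^+ 2 / sqnorm (g - s))))
  /\
  (f xk - (f z + m / 2 * sqnorm (z - xk)) < beta * (f xk - ftj z) ->
   let Delta := f xk - etaj in
   eta1 >= etaj + 2^-1 *
     (if g == s then (1 - beta) * Delta
      else Num.min ((1 - beta) * Delta)
                   ((1 - beta) ^+ 2 * rho * Delta ^+ 2 / sqnorm (g - s)))).
Proof.
move=> hm hwc hrho hb0 hb1 hcvx hle hz etaj s hsub hcvx1 hle1 hL1 hL2 [[w hw] hmin] eps.
set V := sqnorm (g - s).
have hV0 : 0 <= V by exact: sqnorm_ge0.
have heps0 : 0 <= eps by rewrite /eps subr_ge0 hle.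
have key : forall M, 0 <= M -> M <= eps -> M * V <= rho * eps ^+ 2 ->
    etaj + 2^-1 * M <= eta1.
  move=> M hM0 hMe hMV.
  rewrite -hw /=.
  set d := w - z; set e := z - xk.
  have hde : w - xk = d + e by rewrite /d /e addrA subrK.
  have hS : sqnorm (w - xk) = sqnorm d + 2 * dotp d e + sqnorm e
    by rewrite hde sqnormD.
  have hsd : dotp s d = - rho * dotp d e.
    by rewrite /s dotpZl -opprB dotpNl dotpC /e mulNr mulrN.
  have h1 := hL1 w; rewrite -/d hsd in h1.
  have h2 := hL2 w; rewrite -/d -/e in h2.
  pose lam := M / eps.
  have [hl0 hl1 hlM hlV] : [/\ 0 <= lam, lam <= 1, lam * eps = M & lam ^+ 2 * V <= rho * M].
    have [he0|hep] := eqVneq eps 0.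
      have hM : M = 0 by apply/le_anti; rewrite hM0 -he0 hMe.
      by rewrite /lam hM he0 !mul0r; split; rewrite ?expr0n ?mul0r ?mulr0 //.
    have hep' : 0 < eps by rewrite lt_def hep heps0.
    split.
    - by rewrite /lam divr_ge0.
    - by rewrite /lam ler_pdivrMr // mul1r.
    - by rewrite /lam divfK.
    - rewrite /lam expr_div_n.
      have -> : M ^+ 2 / eps ^+ 2 * V = M * (M * V) / eps ^+ 2 by rewrite /=; field.
      rewrite ler_pdivrMr ?exprn_gt0 //.
      have := ler_wpM2l hM0 hMV. nra.
  have hsq' : 0 <= dotp d d + 2 * (lam / rho) * (dotp d g + rho * dotp d e) + (lam / rho) ^+ 2 * V.
    have := sqnorm_ge0 (d + (lam / rho) *: (g - s)).
    rewrite sqnormD sqnormZ dotpZr (dotpC d (g - s)) dotpBl hsd (dotpC g d) -/V.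
    by congr (_ <= _); rewrite /sqnorm; ring.
  rewrite hS /etaj -/e.
  apply: (@scalar_step R rho lam M eps (dotp d d) (dotp d e) (sqnorm e) (dotp d g) (ftj1 w) (ftj z) (f z + m/2*sqnorm e) V hrho hl0 hl1 hlM hlV _ _ hsq').
  - by move: h1; rewrite mulNr.
  - by rewrite (dotpC d g).
  - by rewrite /eps.
have hVs : g == s -> V = 0 by move/eqP=> hgs; rewrite /V hgs subrr sqnorm0.
split.
  case: ifP => hgs.
    by apply: key => //; rewrite hVs // mulr0 mulr_ge0 ?exprn_ge0 // ltW.
  have [h0 [h1 h2]] := minV heps0 (mulr_ge0 (ltW hrho) (exprn_ge0 2 heps0)) hV0.
  by apply: key.

move=> hbeta /=; set Delta := f xk - etaj.
have hD0 : 0 <= Delta.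
  have := hz xk; rewrite subrr sqnorm0 mulr0 addr0 -/etaj => h.
  have := hle xk; rewrite subrr sqnorm0 mulr0 addr0 => h'.
  by rewrite /Delta subr_ge0 (le_trans h h').
have hE0 : 0 <= rho / 2 * sqnorm (z - xk) by rewrite mulr_ge0 ?sqnorm_ge0 // divr_ge0 // ltW.
have hDe : (1 - beta) * Delta <= eps.
  rewrite /Delta /etaj /eps; nra.
have hD0' : 0 <= (1 - beta) * Delta by rewrite mulr_ge0 // subr_ge0 ltW.
have hsq : (1 - beta) ^+ 2 * rho * Delta ^+ 2 <= rho * eps ^+ 2.
  have hq : ((1 - beta) * Delta) ^+ 2 <= eps ^+ 2.
    by rewrite ler_pXn2r ?nnegrE // (le_trans hD0' hDe).
  rewrite exprMn in hq.
  have := ler_wpM2l (ltW hrho) hq.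
  by rewrite mulrA (mulrC rho (_ ^+ 2)).
case: ifP => hgs.
  by apply: key => //; rewrite hVs // mulr0 mulr_ge0 ?exprn_ge0 // ltW.
have hb : 0 <= (1 - beta) ^+ 2 * rho * Delta ^+ 2.
  have hbb : 0 <= 1 - beta by rewrite subr_ge0 ltW.
  by rewrite mulr_ge0 ?exprn_ge0 // mulr_ge0 ?exprn_ge0 // ltW.
have [h0 [h1 h2]] := minV hD0' hb hV0.
apply: key => //; first exact: le_trans h1 hDe.
exact: le_trans h2 hsq.
Qed.
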